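(* Let $G$ be a finite connected multigraph (multiple edges and self-loops allowed) with $n\ge2$ vertices, having two distinct distinguished vertices $v_A,v_B$ of degree $3$ while every other vertex has degree $4$ (a connected two-point $\phi^4$ graph; $v_A,v_B$ are its external vertices, each carrying one external leg). Suppose $G$ contains no generalized tadpole subgraph. Then there exists an exhausting sequence of cuts for $G$, i.e. a sequence of vertex sets $\emptyset=A_0\subsetneq A_1\subsetneq\cdots\subsetneq A_{n-1}\subsetneq A_n=V(G)$ such that for every $p=1,\dots,n-1$, $(A_p,B_p:=V(G)\setminus A_p)$ is an $(A,B)$-cut of $G$.
   Context: A set $S$ of vertices of $G$ is connected if the subgraph consisting of the vertices of $S$ and all lines of $G$ with both ends in $S$ (its inner lines) is connected. For a connected vertex set $S$, its external half-lines are the half-lines (including external legs of $v_A,v_B$) at vertices of $S$ that do not belong to inner lines of $S$. A generalized tadpole subgraph is a connected vertex set $S$ with exactly two external half-lines, both attached to the same vertex of $S$. An $(A,B)$-cut of $G$ is a partition of the vertex set of $G$ into two sets $A$ and $B$ with $v_A\in A$, $v_B\in B$, and both $A$ and $B$ connected. *)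

(* Defs.v *)
From mathcomp Require Import all_boot.
Set Implicit Arguments.
Unset Strict Implicit.
Unset Printing Implicit Defensive.

Section TwoPointGraph.
Variables (V E : finType) (src tgt : E -> V) (vA vB : V).

(* Half-lines: inl (e, false) = the src-half of line e, inl (e, true) = the
   tgt-half of line e; inr false = external leg at vA, inr true = external
   leg at vB. *)
Definition halfline : finType := ((E * bool) + bool)%type.

Definition hvert (h : halfline) : V :=
  match h with
  | inl (e, b) => if b then tgt e else src e
  | inr b => if b then vB else vA
  end.

Definition inner_line (S : {set V}) (e : E) : bool :=
  (src e \in S) && (tgt e \in S).

Definition half_in_inner (S : {set V}) (h : halfline) : bool :=
  match h with
  | inl (e, _) => inner_line S e
  | inr _ => false
  end.

Definition ext_half (S : {set V}) : {set halfline} :=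
  [set h | (hvert h \in S) && ~~ half_in_inner S h].

Definition adjS (S : {set V}) : rel V := fun x y =>
  [&& x \in S, y \in S &
      [exists e, ((src e == x) && (tgt e == y)) || ((src e == y) && (tgt e == x))]].

Definition connected_set (S : {set V}) : bool :=
  (S != set0) && [forall x in S, forall y in S, connect (adjS S) x y].

Definition gen_tadpole (S : {set V}) : bool :=
  [&& connected_set S, #|ext_half S| == 2 &
      [exists v, forall h in ext_half S, hvert h == v]].

(* degree = number of line half-edges at v (self-loop counts twice),
   external legs not counted *)
Definition deg (v : V) : nat := #|[set h : E * bool | hvert (inl h) == v]|.

Definition two_point_phi4 : Prop :=
  [/\ vA != vB, connected_set setT, deg vA = 3, deg vB = 3
    & forall v, v != vA -> v != vB -> deg v = 4].

Definition AB_cut (A : {set V}) : bool :=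
  [&& vA \in A, vB \in ~: A, connected_set A & connected_set (~: A)].

End TwoPointGraph.

(* Main.v *)
Require Import Defs.
From mathcomp Require Import all_boot zify.
Set Implicit Arguments.
Unset Strict Implicit.
Unset Printing Implicit Defensive.

Lemma exitP (T : finType) (e : rel T) (P : {pred T}) a b :
  connect e a b -> a \in P -> b \notin P ->
  exists x y, [/\ x \in P, y \notin P & e x y].
Proof.
move/connectP=> [p]; elim: p a => [|c p IH] a /=.
  by move=> _ -> ->.
move=> /andP[eac pth] lst aP bP.
case cP: (c \in P).
  exact: (IH c pth lst cP bP).
by exists a, c; rewrite cP aP eac.
Qed.

Section G.
Variables (V E : finType) (src tgt : E -> V).

Definition lineb x y := [exists e, ((src e == x) && (tgt e == y)) || ((src e == y) && (tgt e == x))].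

Lemma adjSE (S : {set V}) x y : adjS src tgt S x y = [&& x \in S, y \in S & lineb x y].
Proof. by []. Qed.

Lemma lineb_sym : symmetric lineb.
Proof.
move=> x y; apply/existsP/existsP=> [] [e He]; exists e; by rewrite orbC.
Qed.

Lemma adj_sym (S : {set V}) : symmetric (adjS src tgt S).
Proof. by move=> x y; rewrite !adjSE lineb_sym andbCA. Qed.

Lemma conn_sym (S : {set V}) : connect_sym (adjS src tgt S).
Proof. exact: sym_connect_sym (adj_sym S). Qed.

Lemma adj_mono (S S' : {set V}) x y : S \subset S' ->
  connect (adjS src tgt S) x y -> connect (adjS src tgt S') x y.
Proof.
move=> sub; apply: connect_sub => u v; rewrite !adjSE => /and3P[uS vS l].
by apply: connect1; rewrite adjSE (subsetP sub _ uS) (subsetP sub _ vS) l.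
Qed.

Lemma conn_in (S : {set V}) x y : connect (adjS src tgt S) x y -> x \in S -> y \in S.
Proof.
move=> c xS; apply/negPn/negP=> yS.
have [u [v [uS vS]]] := exitP c xS yS.
by rewrite adjSE (negbTE vS) andbF.
Qed.

Lemma adj_restrict (S : {set V}) y x :
  connect (adjS src tgt S) y x ->
  connect (adjS src tgt [set z | connect (adjS src tgt S) y z]) y x.
Proof.
set C := [set z | _].
move/connectP=> [p pth ->]; apply/connectP; exists p => //.
have : y \in C by rewrite inE connect0.
move: (y) pth; elim: p => [|c p IH] z //= /andP[zc pth] zC.
have cC : c \in C.
  by move: zC; rewrite /C !inE => zC; apply: connect_trans zC (connect1 zc).
rewrite (IH c pth cC) andbT adjSE zC cC /=.
by move: zc; rewrite adjSE => /and3P[].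
Qed.

Lemma conn_add (S : {set V}) s w : connected_set src tgt S -> s \in S -> lineb s w ->
  connected_set src tgt (w |: S).
Proof.
move=> /andP[_ /forallP cS] sS l.
have toS : forall x, x \in w |: S -> connect (adjS src tgt (w |: S)) x s.
  move=> x; rewrite in_setU1 => /orP[/eqP->|xS].
    by apply: connect1; rewrite adjSE setU11 in_setU1 sS orbT lineb_sym.
  apply: (adj_mono (subsetUr _ _)).
  by have /implyP/(_ xS)/forallP/(_ s)/implyP/(_ sS) := cS x.
apply/andP; split.
  by apply/set0Pn; exists w; rewrite setU11.
apply/forallP=> x; apply/implyP=> xS; apply/forallP=> z; apply/implyP=> zS.
apply: connect_trans (toS x xS) _.
by rewrite conn_sym; apply: toS.
Qed.

End G.
Section C.
Variables (V E : finType) (src tgt : E -> V) (vA vB : V).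
Hypothesis phi : two_point_phi4 src tgt vA vB.

Local Notation hv := (hvert src tgt vA vB).

Lemma halves_at w : #|[set h : halfline E | hv h == w]| = 4.
Proof.
case: phi => nAB _ dA dB dO.
rewrite -sum1_card.
have -> : \sum_(i in [set h : halfline E | hv h == w]) 1 =
   \sum_(h : halfline E | hv h == w) 1.
  by apply: eq_bigl => h; rewrite inE.
rewrite (big_sumType _ (fun h : halfline E => hv h == w)) /=.
have -> : \sum_(i : E * bool | hv (inl i) == w) 1 = deg src tgt vA vB w.
  by rewrite /deg -sum1_card; apply: eq_bigl => h; rewrite inE.
rewrite big_mkcond big_bool /=.
case: (eqVneq w vA) => [->|nA].
  by rewrite dA eq_sym (negbTE nAB).
case: (eqVneq w vB) => [->|nB].
  by rewrite dB.
by rewrite dO // eq_sym (negbTE nB).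
Qed.

Lemma ext_even (S : {set V}) : ~~ odd #|ext_half src tgt vA vB S|.
Proof.
set I := [set h : halfline E | half_in_inner src tgt S h].
set H := [set h : halfline E | hv h \in S].
have e1 : H :\: I = ext_half src tgt vA vB S.
  by apply/setP=> h; rewrite !inE andbC.
have e2 : H :&: I = I.
  apply/setIidPr/subsetP=> h; rewrite !inE.
  case: h => [[e b]|b] //=; rewrite /inner_line => /andP[s t].
  by case: b.
have e3 : #|I| = #|[set e | inner_line src tgt S e]| * 2.
  have -> : I = inl @: setX [set e | inner_line src tgt S e] [set: bool].
    apply/setP=> h; rewrite inE; case: h => [[e b]|b] /=.
      by rewrite mem_imset ?inE ?andbT //; move=> x y [].
    by symmetry; apply/negbTE/imsetP; case.
  by rewrite card_imset; [rewrite cardsX cardsT card_bool | move=> x y []].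
have e4 : #|H| = 4 * #|S|.
  rewrite -sum1_card (partition_big hv (mem S)) /=; last by move=> h; rewrite inE.
  rewrite -sum1_card big_distrr /= muln1.
  apply: eq_bigr => v vS; rewrite -(halves_at v) -sum1_card.
  by apply: eq_bigl => h; rewrite !inE; case: eqP => [->|]; rewrite ?vS ?andbF.
have := cardsID I H; rewrite e1 e2 e3 e4 => /(congr1 odd).
by rewrite oddD oddM /= oddM andbF addFb => ->.
Qed.

Lemma comp_tadpole (W C : {set V}) w y :
  C = [set z | connect (adjS src tgt (W :\ w)) y z] ->
  connected_set src tgt W -> w \in W -> y \in W :\ w ->
  vA \notin C -> vB \notin C ->
  (forall e, src e \in C -> tgt e \in W) ->
  (forall e, tgt e \in C -> src e \in W) ->
  (exists h, (hv h == w) && ~~ half_in_inner src tgt (w |: C) h) ->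
  gen_tadpole src tgt vA vB (w |: C).
Proof.
move=> HC conW wW yW nAC nBC clS clT [h1 /andP[h1w h1n]].
have CW : forall z, z \in C -> z \in W :\ w.
  by move=> z; rewrite HC inE => /conn_in; apply.
have wC : w \notin C by apply/negP=> /CW; rewrite !inE eqxx.
have yC : y \in C by rewrite HC inE connect0.
have Ccon : connected_set src tgt C.
  apply/andP; split; first by apply/set0Pn; exists y.
  apply/forallP=> x; apply/implyP=> xC; apply/forallP=> z; apply/implyP=> zC.
  have cx := xC; have cz := zC; rewrite HC inE in cx; rewrite HC inE in cz.
  have := adj_restrict cx; have := adj_restrict cz; rewrite -HC => c2 c1.
  by apply: connect_trans c2; rewrite conn_sym.
have stepC : forall a b, a \in C -> lineb src tgt a b -> b \in w |: C.
  move=> a b aC l.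
  have bW : b \in W.
    case/existsP: l => e /orP[] /andP[/eqP sa /eqP tb].
      by rewrite -tb; apply: clS; rewrite sa.
    by rewrite -sa; apply: clT; rewrite tb.
  rewrite in_setU1; case: eqP => //= /eqP bw.
  have aC' := aC; rewrite HC inE in aC'; rewrite HC inE.
    apply: connect_trans aC' (connect1 _).
  by rewrite adjSE CW //= !inE bw bW.
have [x [z [xC zC xz]]] : exists x z, [/\ x \in C, z \notin C & adjS src tgt W x z].
  apply: exitP yC wC.
  have yW' : y \in W by move: yW; rewrite !inE => /andP[].
  by have /andP[_ /forallP/(_ y)/implyP/(_ yW')/forallP/(_ w)/implyP/(_ wW)] := conW.
have zw : z = w.
  apply/eqP/negPn/negP=> zw; move: xz; rewrite adjSE => /and3P[_ zW l].
  by have := stepC x z xC l; rewrite in_setU1 (negbTE zw) (negbTE zC).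
move: xz; rewrite zw adjSE => /and3P[_ _ xw].
have inner_of : forall e, (src e \in C) || (tgt e \in C) ->
    (src e \in w |: C) && (tgt e \in w |: C) .
  move=> e /orP[] H.
  - rewrite in_setU1 H orbT /=; apply: (stepC (src e)) => //.
    by apply/existsP; exists e; rewrite !eqxx.
  - rewrite [tgt e \in _]in_setU1 H orbT andbT; apply: (stepC (tgt e)) => //.
    by apply/existsP; exists e; rewrite !eqxx orbT.
have ext_at : forall h, h \in ext_half src tgt vA vB (w |: C) -> hv h == w.
  move=> h; rewrite inE => /andP[]; rewrite in_setU1 => /orP[//|hC].
  case: h hC => [[e b]|b] /= hC.
    rewrite /inner_line inner_of //.
    by case: b hC => ->; rewrite ?orbT.
  by case: b hC => hC; [rewrite hC in nBC | rewrite hC in nAC].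
have [h0 /andP[h0w h0i]] : exists h0, (hv h0 == w) && half_in_inner src tgt (w |: C) h0.
  case/existsP: xw => e /orP[] /andP[/eqP sx /eqP tw].
    exists (inl (e, true)); rewrite /= tw eqxx /= /inner_line.
    by rewrite inner_of // sx xC.
  exists (inl (e, false)); rewrite /= sx eqxx /= /inner_line.
  by rewrite inner_of // tw xC orbT.
have sub : ext_half src tgt vA vB (w |: C) \subset [set h | hv h == w] :\ h0.
  apply/subsetP=> h hE; rewrite !inE ext_at // andbT.
  by apply/eqP=> eh; move: hE; rewrite eh inE h0i andbF.
have le3 := subset_leq_card sub.
have := cardsD1 h0 [set h | hv h == w]; rewrite inE h0w halves_at add1n => -[e3].
rewrite -e3 in le3.
have h1E : h1 \in ext_half src tgt vA vB (w |: C).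
  by rewrite inE (eqP h1w) setU11.
have ge1 : 0 < #|ext_half src tgt vA vB (w |: C)| by apply/card_gt0P; exists h1.
have ev := ext_even (w |: C).
apply/and3P; split.
- exact: conn_add Ccon xC xw.
- move: le3 ge1 ev; case: #|_| => [|[|[|[|]]]] //.
- by apply/existsP; exists w; apply/forallP=> h; apply/implyP; apply: ext_at.
Qed.

Hypothesis notad : forall S : {set V}, ~~ gen_tadpole src tgt vA vB S.

Lemma conn_from (S : {set V}) r : r \in S ->
  (forall y, y \in S -> connect (adjS src tgt S) r y) -> connected_set src tgt S.
Proof.
move=> rS H; apply/andP; split; first by apply/set0Pn; exists r.
apply/forallP=> x; apply/implyP=> xS; apply/forallP=> z; apply/implyP=> zS.
by apply: connect_trans (H z zS); rewrite conn_sym; apply: H.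
Qed.

Definition lineA (A : {set V}) v :=
  [exists e, ((src e == v) && (tgt e \in A)) || ((tgt e == v) && (src e \in A))].
Definition cand (A : {set V}) v := [&& v \in ~: A, v != vB & lineA A v].
Definition Rv (A : {set V}) v := [set z | connect (adjS src tgt (~: A :\ v)) vB z].

Lemma base : connected_set src tgt (~: [set vA]).
Proof.
case: phi => nAB conT _ _ _.
have -> : ~: [set vA] = [set: V] :\ vA by apply/setP=> x; rewrite !inE andbT.
have vBT : vB \in [set: V] :\ vA by rewrite !inE andbT eq_sym.
apply: (conn_from vBT) => y yT; apply/negPn/negP=> ny.
set C := [set z | connect (adjS src tgt ([set: V] :\ vA)) y z].
have CW : forall z, z \in C -> z \in [set: V] :\ vA.
  by move=> z; rewrite inE => /conn_in; apply.
have vAC : vA \notin C by apply/negP=> /CW; rewrite !inE eqxx.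
have vBC : vB \notin C.
  by apply/negP; rewrite inE => c; rewrite conn_sym c in ny.
have := notad (vA |: C).
rewrite (@comp_tadpole [set: V] C vA y erefl conT (in_setT _) yT vAC vBC) //.
by exists (inr false); rewrite /= eqxx.
Qed.

Lemma step (A : {set V}) : AB_cut src tgt vA vB A -> 1 < #|~: A| ->
  exists v, (v \notin A) && AB_cut src tgt vA vB (v |: A).
Proof.
case/and4P=> vAA vBB Acon Bcon gt1.
have vBA : vB \notin A by rewrite inE in vBB.
have [v0 c0] : exists v, cand A v.
  case: (boolP [exists v, cand A v]) => [/existsP//|/existsPn nc].
  have [y [yB yvB]] : exists y, y \in ~: A /\ y != vB.
    case/card_gt1P: gt1 => x [z [xB zB xz]].
    case: (eqVneq x vB) => [exB|nxB]; last by exists x.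
    by exists z; split => //; rewrite -exB eq_sym.
  set C := [set z | connect (adjS src tgt (~: A :\ vB)) y z].
  have yW : y \in ~: A :\ vB by rewrite in_setD1 yvB.
  have CW : forall z, z \in C -> z \in ~: A :\ vB.
    by move=> z; rewrite inE => /conn_in; apply.
  have vAC : vA \notin C by apply/negP=> /CW; rewrite !inE vAA andbF.
  have vBC : vB \notin C by apply/negP=> /CW; rewrite !inE eqxx.
  have := notad (vB |: C).
  rewrite (@comp_tadpole (~: A) C vB y erefl Bcon vBB yW vAC vBC) //.
  - move=> e /CW; rewrite in_setD1 => /andP[sB sA].
    apply/negPn/negP=> tA; have := nc (src e).
    have lA : lineA A (src e).
      by apply/existsP; exists e; rewrite eqxx /=; rewrite inE negbK in tA; rewrite tA.
    by rewrite /cand sB sA lA.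
  - move=> e /CW; rewrite in_setD1 => /andP[sB sA].
    apply/negPn/negP=> tA; have := nc (tgt e).
    have lA : lineA A (tgt e).
      by apply/existsP; exists e; rewrite eqxx /=; rewrite inE negbK in tA; rewrite tA orbT.
    by rewrite /cand sB sA lA.
  - by exists (inr true); rewrite /= eqxx.
case: (@arg_maxnP _ v0 (cand A) (fun v => #|Rv A v|) c0) => v cv maxv.
move: (cv); rewrite /cand => /and3P[vB' vvB lAv].
have vBR : vB \in Rv A v by rewrite inE connect0.
have RW : forall z, z \in Rv A v -> z \in ~: A :\ v.
  by move=> z; rewrite inE => /conn_in; apply; rewrite in_setD1 eq_sym vvB.
have allR : forall y, y \in ~: A :\ v -> y \in Rv A v.
  move=> y yW; apply/negPn/negP=> yR.
  set C := [set z | connect (adjS src tgt (~: A :\ v)) y z].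
  have CW : forall z, z \in C -> z \in ~: A :\ v.
    by move=> z; rewrite inE => /conn_in; apply.
  have disj : forall z, z \in C -> z \notin Rv A v.
    move=> z; rewrite !inE => c1; apply/negP=> c2; move/negP: yR; apply.
    by rewrite inE (connect_trans c2) // conn_sym.
  have vBC : vB \notin C by apply/negP=> /disj; rewrite vBR.
  have vAC : vA \notin C by apply/negP=> /CW; rewrite !inE vAA andbF.
  case: (boolP [exists v', (v' \in C) && lineA A v']) => [/existsP [v' /andP[v'C v'A]] | /existsPn nlA].
  - have v'W := CW _ v'C; move: (v'W); rewrite in_setD1 => /andP[v'v v'B].
    have cv' : cand A v'.
      by rewrite /cand v'B v'A andbT; apply/negP=> /eqP e; rewrite e in v'C; rewrite v'C in vBC.
    have := maxv v' cv'; apply/negP; rewrite -ltnNge.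
    have subR : forall z, z \in Rv A v -> connect (adjS src tgt (~: A :\ v')) vB z.
      move=> z zR; have := zR; rewrite inE => /adj_restrict; apply: adj_mono.
      apply/subsetP=> u uR; have := RW u uR; rewrite !in_setD1 => /andP[_ ->]; rewrite andbT.
      by apply/eqP=> e; rewrite e in uR; move: (disj _ v'C); rewrite uR.
    apply: proper_card; apply/properP; split.
      by apply/subsetP=> z zR; rewrite inE; apply: subR.
    exists v.
    + have cBv : connect (adjS src tgt (~: A)) vB v.
        by move: Bcon => /andP[_ /forallP/(_ vB)/implyP/(_ vBB)/forallP/(_ v)/implyP/(_ vB')].
      have vR : v \notin Rv A v by apply/negP=> /RW; rewrite !inE eqxx.
      have [a [b [aR bR ab]]] := exitP cBv vBR vR.
      move: ab; rewrite adjSE => /and3P[aB bB lab].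
      have aW := RW a aR.
      have bv : b = v.
        apply/eqP/negPn/negP=> bv; move/negP: bR; apply; rewrite inE.
        move: aR; rewrite inE => aR; apply: connect_trans aR (connect1 _).
        by apply/and3P; split => //; rewrite in_setD1 bv.
      rewrite inE; apply: connect_trans (subR a aR) (connect1 _).
      have av' : a != v'.
        by apply/eqP=> e; rewrite e in aR; move: (disj _ v'C); rewrite aR.
      have aB' : a \in ~: A by have := RW a aR; rewrite in_setD1 => /andP[].
      rewrite adjSE -bv lab andbT !in_setD1 av' aB' bB andbT /=.
      by rewrite andbT bv eq_sym.
    + by apply/negP=> /RW; rewrite !inE eqxx.
  - have yW' := yW.
    have := notad (v |: C).
    rewrite (@comp_tadpole (~: A) C v y erefl Bcon vB' yW' vAC vBC) //.
    + move=> e sC; apply/negPn/negP=> tA; have := nlA (src e).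
      have lA : lineA A (src e).
        by apply/existsP; exists e; rewrite eqxx /=; rewrite inE negbK in tA; rewrite tA.
      by rewrite sC lA.
    + move=> e sC; apply/negPn/negP=> tA; have := nlA (tgt e).
      have lA : lineA A (tgt e).
        by apply/existsP; exists e; rewrite eqxx /=; rewrite inE negbK in tA; rewrite tA orbT.
      by rewrite sC lA.
    + case/existsP: lAv => e /orP[] /andP[/eqP sv tA].
      * exists (inl (e, false)); rewrite /= sv eqxx /= /inner_line.
        rewrite [tgt e \in _]in_setU1 andbC negb_and; apply/orP; left.
        apply/norP; split; first by apply/eqP=> te; rewrite te in tA; rewrite inE tA in vB'.
        by apply/negP=> /CW; rewrite in_setD1 inE tA andbF.
      * exists (inl (e, true)); rewrite /= sv eqxx /= /inner_line.
        rewrite [src e \in _]in_setU1 negb_and; apply/orP; left.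
        apply/norP; split; first by apply/eqP=> te; rewrite te in tA; rewrite inE tA in vB'.
        by apply/negP=> /CW; rewrite in_setD1 inE tA andbF.
have vnA : v \notin A by rewrite inE in vB'.
exists v; rewrite vnA /=.
have eC : ~: (v |: A) = ~: A :\ v.
  by apply/setP=> x; rewrite !inE negb_or andbC.
apply/and4P; split.
- by rewrite in_setU1 vAA orbT.
- by rewrite eC in_setD1 eq_sym vvB.
- case/existsP: lAv => e /orP[] /andP[/eqP sv tA].
  + apply: (conn_add Acon tA); apply/existsP; exists e; by rewrite sv !eqxx orbT.
  + apply: (conn_add Acon tA); apply/existsP; exists e; by rewrite sv !eqxx.
- rewrite eC; apply: (conn_from (RW _ vBR)) => y yW.
  by have := allR y yW; rewrite inE.
Qed.

Definition next (A : {set V}) : {set V} :=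
  match [pick v | (v \notin A) && AB_cut src tgt vA vB (v |: A)] with
  | Some v => v |: A | None => setT end.

Lemma next_spec A : AB_cut src tgt vA vB A -> 1 < #|~: A| ->
  [/\ AB_cut src tgt vA vB (next A), A \proper next A & #|next A| = #|A|.+1].
Proof.
move=> cA gt1; rewrite /next; case: pickP => [v /andP[vA' cv]|none].
  split => //; first by by rewrite properUr // sub1set.
  by rewrite cardsU1 vA'.
by have [v /andP[vA' cv]] := step cA gt1; have := none v; rewrite vA' cv.
Qed.

Lemma inv k : k.+1 < #|V| ->
  AB_cut src tgt vA vB (iter k next [set vA]) /\ #|iter k next [set vA]| = k.+1.
Proof.
case: phi => nAB _ _ _ _.
elim: k => [|k IH] lt /=.
  split; last by rewrite cards1.
  apply/and4P; split.
  - by rewrite set11.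
  - by rewrite !inE eq_sym.
  - apply: (conn_from (set11 vA)) => y; rewrite inE => /eqP ->; exact: connect0.
  - exact: base.
have [c1 e1] := IH (ltnW lt).
have gt1 : 1 < #|~: iter k next [set vA]|.
  by have := cardsC (iter k next [set vA]); rewrite e1 => e; lia.
have [c2 _ e2] := next_spec c1 gt1.
by rewrite e2 e1.
Qed.
End C.

Theorem lemma1 (V E : finType) (src tgt : E -> V) (vA vB : V) :
  2 <= #|V| ->
  two_point_phi4 src tgt vA vB ->
  (forall S : {set V}, ~~ gen_tadpole src tgt vA vB S) ->
  exists A : nat -> {set V},
    [/\ A 0 = set0, A #|V| = setT,
        (forall p, p < #|V| -> A p \proper A p.+1)
      & (forall p, 0 < p < #|V| -> AB_cut src tgt vA vB (A p))].
Proof.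
move=> n2 phi notad.
pose A p := if p == 0 then set0 else if p < #|V| then iter p.-1 (next src tgt vA vB) [set vA] else setT.
exists A; split.
- by [].
- by rewrite /A ltnn; case: #|V| n2.
- move=> [|p] lt.
    rewrite /A /= (leq_trans _ n2) //=; apply/properP; split; first exact: sub0set.
    by exists vA; rewrite ?set11 ?inE.
  have [c1 e1] := inv phi notad lt.
  rewrite /A /= lt.
  case: ltnP => lt2.
    have gt1 : 1 < #|~: iter p (next src tgt vA vB) [set vA]|.
      have := cardsC (iter p (next src tgt vA vB) [set vA]); rewrite e1 => e.
      have e' : p.+1 + #|~: iter p (next src tgt vA vB) [set vA]| = #|V| := e; have lt3 : p.+2 < #|V| := lt2; lia.
    by have [_ pr _] := next_spec phi notad c1 gt1.
  rewrite properT; apply/eqP=> eT; move: c1; rewrite eT => /and4P[_].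
  by rewrite inE in_setT.
- move=> [|p] //= lt.
  rewrite /A /= lt.
  by have [] := inv phi notad lt.
Qed.
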